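(* Fix an index $k\ge 0$ and approximations $x_1^{[k]},\dots,x_m^{[k]}\in(a,b)$. For each $i=1,\dots,m$ assume that the iteration $$x_i^{[k+1]} = x_i^{[k]} - \alpha_i f(x_i^{[k]})\Big[f'(x_i^{[k]}) - f(x_i^{[k]})\,Q_i'(x_i^{[k]})\big[(\alpha_i+1)Q_i(x_i^{[k]})\big]^{-1}\Big]^{-1}\qquad(\ast)$$ is well defined, i.e. $Q_i(x_i^{[k]})\neq 0$ and the bracket being inverted is nonzero. Suppose there are real numbers $A_{is},B_{is}$ ($i,s=1,\dots,m$) such that for every $i$ $$\Phi_i^{(\alpha_i+1)}(x_i)=\sum_{s=1}^m A_{is}\,(x_s^{[k]}-x_s),\qquad \Psi_i^{(\alpha_i-1)}(x_i)=(\alpha_i+1)\big[f^{(\alpha_i)}(x_i)\big]^2+\sum_{s=1}^m B_{is}\,(x_s^{[k]}-x_s).$$ Let $A,B,M,K,P$ be constants with $|A_{is}|\le A$ and $|B_{is}|\le B$ for all $i,s$; $|\Phi_i^{(\alpha_i+2)}(x)|\le M$ and $|\Psi_i^{(\alpha_i)}(x)|\le K$ for all $i$ and all $x$ in the closed interval with endpoints $x_i$ and $x_i^{[k]}$; and $0<P\le |f^{(\alpha_i)}(x_i)|$ for all $i$. Let $c>0$ and $0<q<1$ be real numbers such that for every $i=1,\dots,m$ $$c^2\Big[mA+\frac{M}{\alpha_i+2}\Big] < (\alpha_i+1)^2\alpha_i P^2 - c(\alpha_i+1)\big[\alpha_i B m+K\big].$$ If $|x_i^{[k]}-x_i|<c\,q^{3^k}$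 for all $i=1,\dots,m$, then $|x_i^{[k+1]}-x_i|<c\,q^{3^{k+1}}$ for all $i=1,\dots,m$. (In particular, the method $(\ast)$ has third order of convergence.)
   Context: Let $(a,b)$ be a real interval and let $\varphi_0,\dots,\varphi_n$ be infinitely differentiable real functions on $(a,b)$ forming a Chebyshev system there. Let $\alpha_1,\dots,\alpha_m$ be positive integers with $\sum_{j=1}^m\alpha_j=n$. For $x,y_1,\dots,y_m\in(a,b)$ let $D(x;y_1,\dots,y_m)$ denote the determinant of the $(n+1)\times(n+1)$ matrix whose first row is $(\varphi_0(x),\dots,\varphi_n(x))$, followed, for $j=1,\dots,m$ in order and for $r=0,1,\dots,\alpha_j-1$ in order, by the rows $(\varphi_0^{(r)}(y_j),\dots,\varphi_n^{(r)}(y_j))$. Let $x_1,\dots,x_m\in(a,b)$ be distinct and set $f(x)=D(x;x_1,\dots,x_m)$; this is a generalized polynomial $\sum_{j=0}^n a_j\varphi_j(x)$ having zeros $x_1,\dots,x_m$ of multiplicities $\alpha_1,\dots,\alpha_m$. Given approximations $x_1^{[k]},\dots,x_m^{[k]}\in(a,b)$ of these zeros, define for $i=1,\dots,m$ $$Q_i(x)=\frac{\partial^{\alpha_i}}{\partial x^{\alpha_i}}D(x;x_1^{[k]},\dots,x_m^{[k]}),$$ $$\Phi_i(x)=(\alpha_i+1)\big[(x-x_i)f'(x)-\alpha_i f(x)\big]Q_i(x)-(x-x_i)f(x)Q_i'(x),\qquad \Psi_i(x)=(\alpha_i+1)f'(x)Q_i(x)-f(x)Q_i'(x).$$ Derivatives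 of order $0$ mean the function itself. *)

(* Defs.v *)
From Stdlib Require Import Reals.
From mathcomp Require Import all_boot all_algebra.
From mathcomp Require Import Rstruct.
From Coquelicot Require Import Coquelicot.

Set Implicit Arguments.
Unset Strict Implicit.
Unset Printing Implicit Defensive.
Local Open Scope R_scope.

(* Chebyshev system on (a,b): for any n+1 pairwise distinct points of (a,b)
   the collocation matrix [phi_c(t_p)] is nonsingular (equivalently, every
   nontrivial generalized polynomial sum_c a_c phi_c has at most n distinct
   zeros in (a,b)). *)
Definition chebyshev_system (a b : R) (n : nat) (phi : 'I_n.+1 -> R -> R) : Prop :=
  forall t : 'I_n.+1 -> R, injective t -> (forall p, a < t p < b) ->
    determinant (\matrix_(p, c) phi c (t p)) <> 0.

Definition smooth_on (a b : R) (g : R -> R) : Prop :=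
  forall (k : nat) (x : R), a < x < b -> ex_derive_n g k x.

(* The rows following the first one: for j = 1..m in order and r = 0..alpha_j-1
   in order, the row (phi_0^(r)(y_j), ..., phi_n^(r)(y_j)). *)
Definition lower_rows (n m : nat) (phi : 'I_n.+1 -> R -> R) (alpha : 'I_m -> nat)
    (y : 'I_m -> R) : seq ('I_n.+1 -> R) :=
  flatten [seq [seq (fun c : 'I_n.+1 => Derive_n (phi c) r (y j)) | r <- seq.iota 0%N (alpha j)]
          | j <- enum 'I_m].

Definition Dmatrix (n m : nat) (phi : 'I_n.+1 -> R -> R) (alpha : 'I_m -> nat)
    (x : R) (y : 'I_m -> R) : 'M[R]_n.+1 :=
  \matrix_(p, c) if (p == 0%N :> nat) then phi c x
                 else nth (fun _ => 0) (lower_rows phi alpha y) p.-1 c.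

Definition Ddet (n m : nat) (phi : 'I_n.+1 -> R -> R) (alpha : 'I_m -> nat)
    (x : R) (y : 'I_m -> R) : R :=
  determinant (Dmatrix phi alpha x y).


Definition fpoly n m phi alpha (xs : 'I_m -> R) : R -> R :=
  fun x => @Ddet n m phi alpha x xs.

Definition Qfun n m phi alpha (xk : 'I_m -> R) (i : 'I_m) : R -> R :=
  fun x => Derive_n (fun t => @Ddet n m phi alpha t xk) (alpha i) x.

Definition Phifun n m phi alpha (xs xk : 'I_m -> R) (i : 'I_m) : R -> R :=
  fun x =>
    let f := @fpoly n m phi alpha xs in
    let Q := @Qfun n m phi alpha xk i in
    (INR (alpha i) + 1) * ((x - xs i) * Derive f x - INR (alpha i) * f x) * Q x
    - (x - xs i) * f x * Derive Q x.

Definition Psifun n m phi alpha (xs xk : 'I_m -> R) (i : 'I_m) : R -> R :=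
  fun x =>
    let f := @fpoly n m phi alpha xs in
    let Q := @Qfun n m phi alpha xk i in
    (INR (alpha i) + 1) * Derive f x * Q x - f x * Derive Q x.

Definition iter_bracket n m phi alpha (xs xk : 'I_m -> R) (i : 'I_m) : R :=
  let f := @fpoly n m phi alpha xs in
  let Q := @Qfun n m phi alpha xk i in
  Derive f (xk i) - f (xk i) * Derive Q (xk i) / ((INR (alpha i) + 1) * Q (xk i)).

Definition next_iter n m phi alpha (xs xk : 'I_m -> R) (i : 'I_m) : R :=
  let f := @fpoly n m phi alpha xs in
  xk i - INR (alpha i) * f (xk i) / @iter_bracket n m phi alpha xs xk i.

Local Open Scope ring_scope.
Definition lincomb (m : nat) (C d : 'I_m -> R) : R :=
  \sum_(s < m) C s * d s.

(* Main.v *)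
Require Import Defs.
From Stdlib Require Import Reals Lra Psatz FunctionalExtensionality.
From mathcomp Require Import all_boot all_algebra.
From mathcomp Require Import Rstruct.
From Coquelicot Require Import Coquelicot.
Local Open Scope R_scope.

Lemma Rabs_div' u v : Rabs (u / v) = Rabs u / Rabs v.
Proof. by rewrite /Rdiv Rabs_mult Rabs_inv. Qed.

Lemma final_ineq (Phy Psy w d LA Ph2 Ps0 LB Ps1 Fa e mm A B M K P c dl : R) :
  w <> 0 ->
  Phy = w * (d ^ 2 / ((e + 1) * (e + 2)) * (LA + Ph2 * d / (e + 3))) ->
  Psy = w * (Ps0 + Ps1 * d / (e + 1)) ->
  0 <= e -> 0 < c -> 0 < dl -> dl <= c -> Rabs d < dl ->
  Rabs LA <= mm * A * dl -> Rabs Ph2 <= M -> Rabs Ps1 <= K -> Rabs LB <= mm * B * dl ->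
  P <= Rabs Fa -> 0 < P -> 0 <= A -> 0 <= B -> 0 <= mm -> 0 <= M -> 0 <= K ->
  Ps0 = (e + 2) * Fa ^ 2 + LB ->
  c ^ 2 * (mm * A + M / (e + 3)) <
    (e + 2) ^ 2 * (e + 1) * P ^ 2 - c * (e + 2) * ((e + 1) * B * mm + K) ->
  Rabs (Phy / Psy) < dl ^ 3 / c ^ 2.
Proof.
move=> Hw EPh EPs He Hc Hdl Hdlc Hd HLA HPh2 HPs1 HLB HP HP0 HA HB Hm HM HK EPs0 Hyp.
set Nn := mm * A + M / (e + 3).
have HNn : 0 <= Nn.
  rewrite /Nn; apply: Rplus_le_le_0_compat; first by apply: Rmult_le_pos.
  apply: Rmult_le_pos => //; apply: Rlt_le; apply: Rinv_0_lt_compat; lra.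
have Hd2 : d ^ 2 < dl ^ 2.
  have := Rabs_pos d; rewrite -(pow2_abs d); nra.
have HFa : P ^ 2 <= Fa ^ 2.
  rewrite -(pow2_abs Fa); have := Rabs_pos Fa; nra.
set Den := Ps0 + Ps1 * d / (e + 1).
have HPs1d : Rabs (Ps1 * d / (e + 1)) <= K * dl / (e + 1).
  rewrite Rabs_div'.
  rewrite Rabs_mult (_ : Rabs (e + 1) = e + 1); last by apply: Rabs_pos_eq; lra.
  rewrite /Rdiv; apply: Rmult_le_compat_r; first (apply: Rlt_le; apply: Rinv_0_lt_compat; lra).
  apply: Rmult_le_compat; try apply: Rabs_pos; lra.
have HD1 : (e + 2) * P ^ 2 - mm * B * dl - K * dl / (e + 1) <= Den.
  rewrite /Den EPs0.
  have h0 : (e + 2) * P ^ 2 <= (e + 2) * Fa ^ 2 by apply: Rmult_le_compat_l; lra.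
  have h1 := Rle_abs (- LB); rewrite Rabs_Ropp in h1.
  have h2 := Rle_abs (- (Ps1 * d / (e + 1))); rewrite Rabs_Ropp in h2.
  nra.
set E := (e + 1) * (e + 2) * ((e + 2) * P ^ 2 - mm * B * dl - K * dl / (e + 1)).
have HE : E = (e + 2) ^ 2 * (e + 1) * P ^ 2 - dl * (e + 2) * ((e + 1) * B * mm + K).
  rewrite /E; field; lra.
have HEc : c ^ 2 * Nn < E.
  rewrite HE; apply: Rlt_le_trans Hyp _.
  have : 0 <= (e + 2) * ((e + 1) * B * mm + K).
    apply: Rmult_le_pos; first lra.
    apply: Rplus_le_le_0_compat => //; apply: Rmult_le_pos => //; apply: Rmult_le_pos; lra.
  nra.
have HDen : 0 < Den.
  have : 0 < E by have := pow2_ge_0 c; nra.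
  rewrite /E => H.
  have H1 : 0 < (e + 1) * (e + 2) by nra.
  have : 0 < (e + 2) * P ^ 2 - mm * B * dl - K * dl / (e + 1).
    by apply: (Rmult_lt_reg_l ((e + 1) * (e + 2))) => //; lra.
  lra.
have HNum : Rabs (LA + Ph2 * d / (e + 3)) <= dl * Nn.
  apply: Rle_trans (Rabs_triang _ _) _.
  have : Rabs (Ph2 * d / (e + 3)) <= M * dl / (e + 3).
    rewrite Rabs_div'.
    rewrite Rabs_mult (_ : Rabs (e + 3) = e + 3); last by apply: Rabs_pos_eq; lra.
    rewrite /Rdiv; apply: Rmult_le_compat_r; first (apply: Rlt_le; apply: Rinv_0_lt_compat; lra).
    apply: Rmult_le_compat; try apply: Rabs_pos; lra.
  rewrite /Nn; move=> h; rewrite (_ : dl * (mm * A + M / (e + 3)) = mm * A * dl + M * dl / (e + 3)); last by field; lra.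
  lra.
have -> : Phy / Psy = d ^ 2 * (LA + Ph2 * d / (e + 3)) / ((e + 1) * (e + 2) * Den).
  rewrite EPh EPs -/Den; field; repeat split; lra.
have Hpos : 0 < (e + 1) * (e + 2) * Den by apply: Rmult_lt_0_compat => //; nra.
rewrite Rabs_div'.
rewrite (Rabs_pos_eq _ (Rlt_le _ _ Hpos)) Rabs_mult (Rabs_pos_eq (d ^ 2) (pow2_ge_0 d)).
apply: (Rmult_lt_reg_r ((e + 1) * (e + 2) * Den)) => //.
rewrite /Rdiv Rmult_assoc Rinv_l; last lra.
rewrite Rmult_1_r.
have HEDen : E <= (e + 1) * (e + 2) * Den.
  rewrite /E; apply: Rmult_le_compat_l => //; nra.
have Hc2 : 0 < c ^ 2 by nra.
have H3 : d ^ 2 * Rabs (LA + Ph2 * d / (e + 3)) <= d ^ 2 * (dl * Nn).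
  apply: Rmult_le_compat_l => //; apply: pow2_ge_0.
apply: Rle_lt_trans H3 _.
apply: (Rmult_lt_reg_l (c ^ 2)) => //.
rewrite (_ : c ^ 2 * (dl ^ 3 * / c ^ 2 * ((e + 1) * (e + 2) * Den)) = dl ^ 3 * ((e + 1) * (e + 2) * Den)); last by field; lra.
have Hdl3 : 0 < dl ^ 3 by apply: pow_lt.
have : d ^ 2 * (dl * Nn) * c ^ 2 <= dl ^ 2 * (dl * Nn) * c ^ 2.
  apply: Rmult_le_compat_r; first lra.
  apply: Rmult_le_compat_r; first (apply: Rmult_le_pos; lra).
  lra.
have : dl ^ 3 * (c ^ 2 * Nn) < dl ^ 3 * ((e + 1) * (e + 2) * Den).
  apply: Rmult_lt_compat_l => //; lra.
move=> h1 h2.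
rewrite (_ : dl ^ 3 = dl ^ 2 * dl) in h1; last ring.
nra.
Qed.

Set Implicit Arguments.
Unset Strict Implicit.

Lemma locI (a b x : R) : a < x < b -> locally x (fun y => a < y < b).
Proof.
move=> [h1 h2]; apply: (locally_interval _ x (Finite a) (Finite b)) => //=.
Qed.

Lemma Sm_loc a b g x n : smooth_on a b g -> a < x < b ->
  locally x (fun y => forall k, (k <= n)%coq_nat -> ex_derive_n g k y).
Proof.
move=> Hg Hx; refine (filter_imp _ _ _ (locI Hx)) => y Hy k _; exact: Hg.
Qed.

Lemma Sm_plus a b g h : smooth_on a b g -> smooth_on a b h ->
  smooth_on a b (fun x => g x + h x).
Proof. move=> Hg Hh k x Hx; by apply: ex_derive_n_plus; [apply: Sm_loc Hg Hx|apply: Sm_loc Hh Hx]. Qed.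

Lemma Sm_minus a b g h : smooth_on a b g -> smooth_on a b h ->
  smooth_on a b (fun x => g x - h x).
Proof. move=> Hg Hh k x Hx; by apply: ex_derive_n_minus; [apply: Sm_loc Hg Hx|apply: Sm_loc Hh Hx]. Qed.

Lemma Sm_scal a b c g : smooth_on a b g -> smooth_on a b (fun x => c * g x).
Proof. move=> Hg k x Hx; apply: ex_derive_n_scal_l; exact: Hg. Qed.

Lemma Sm_const a b c : smooth_on a b (fun _ => c).
Proof. move=> k x _; exact: ex_derive_n_const. Qed.

Lemma Sm_id a b : smooth_on a b (fun x => x).
Proof.
move=> k x _; apply: (ex_derive_n_ext (fun x => x ^ 1)).
  by move=> t; rewrite pow_1.
exact: ex_derive_n_pow.
Qed.

Lemma Dn_S f k x : Derive_n f k.+1 x = Derive_n (Derive f) k x.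
Proof.
rewrite (_ : k.+1 = (k+1)%coq_nat); last by rewrite Nat.add_1_r.
by rewrite -Derive_n_comp.
Qed.

Lemma Sm_Derive a b g : smooth_on a b g -> smooth_on a b (Derive g).
Proof.
move=> Hg [|k] x Hx //=.
apply: (ex_derive_ext (Derive_n g k.+1)).
  by move=> t; rewrite Dn_S.
exact: (Hg k.+2 x Hx).
Qed.

Lemma Sm_Derive_n a b g r : smooth_on a b g -> smooth_on a b (Derive_n g r).
Proof.
elim: r g => [|r IH] g Hg //.
have -> : Derive_n g r.+1 = Derive_n (Derive g) r.
  by apply: functional_extensionality => t; rewrite Dn_S.
exact: IH (Sm_Derive Hg).
Qed.

Lemma Dn_extI a b g h : (forall x, a < x < b -> g x = h x) ->
  forall k x, a < x < b -> Derive_n g k x = Derive_n h k x.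
Proof.
move=> E k x Hx; apply: Derive_n_ext_loc.
refine (filter_imp _ _ _ (locI Hx)) => y Hy; exact: E.
Qed.

Lemma Sm_extI a b g h : (forall x, a < x < b -> g x = h x) ->
  smooth_on a b g -> smooth_on a b h.
Proof.
move=> E Hg k x Hx; apply: (ex_derive_n_ext_loc g) (Hg k x Hx).
refine (filter_imp _ _ _ (locI Hx)) => y Hy; exact: E.
Qed.

Lemma Der_mult a b g h x : smooth_on a b g -> smooth_on a b h -> a < x < b ->
  Derive (fun t => g t * h t) x = Derive g x * h x + g x * Derive h x.
Proof. move=> Hg Hh Hx; apply: Derive_mult; [exact: (Hg 1%N x Hx)|exact: (Hh 1%N x Hx)]. Qed.

Lemma Dn_mult_S a b g h k x : smooth_on a b g -> smooth_on a b h -> a < x < b ->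
  Derive_n (fun t => g t * h t) k.+1 x =
  Derive_n (fun t => Derive g t * h t + g t * Derive h t) k x.
Proof.
move=> Hg Hh Hx; rewrite Dn_S; apply: (Dn_extI (a:=a) (b:=b)) => // y Hy.
exact: Der_mult Hg Hh Hy.
Qed.

Lemma Sm_mult_aux a b k : forall g h, smooth_on a b g -> smooth_on a b h ->
  forall j x, (j <= k)%N -> a < x < b -> ex_derive_n (fun t => g t * h t) j x.
Proof.
elim: k => [|k IH] g h Hg Hh j x Hj Hx.
  by move: Hj; rewrite leqn0 => /eqP ->.
move: Hj; rewrite leq_eqVlt => /orP [/eqP ->|Hj]; last exact: IH.
case: k IH => [|k] IH.
  apply: ex_derive_mult; [exact: (Hg 1%N x Hx)|exact: (Hh 1%N x Hx)].
change (ex_derive_n (Derive_n (fun t => g t * h t) k.+1) 1 x).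
apply: (ex_derive_n_ext_loc (Derive_n (fun t => Derive g t * h t + g t * Derive h t) k)).
  refine (filter_imp _ _ _ (locI Hx)) => y Hy; symmetry; exact: Dn_mult_S Hg Hh Hy.
change (ex_derive_n (fun t => Derive g t * h t + g t * Derive h t) k.+1 x).
apply: ex_derive_n_plus.
  refine (filter_imp _ _ _ (locI Hx)) => y Hy j0 Hj0.
  apply: IH => //; [exact: Sm_Derive|by apply/leP].
refine (filter_imp _ _ _ (locI Hx)) => y Hy j0 Hj0.
apply: IH => //; [exact: Sm_Derive|by apply/leP].
Qed.

Lemma Sm_mult a b g h : smooth_on a b g -> smooth_on a b h ->
  smooth_on a b (fun t => g t * h t).
Proof. move=> Hg Hh k x Hx; exact: (@Sm_mult_aux a b k g h Hg Hh k x (leqnn k) Hx). Qed.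

Lemma Dn_plus a b g h k x : smooth_on a b g -> smooth_on a b h -> a < x < b ->
  Derive_n (fun t => g t + h t) k x = Derive_n g k x + Derive_n h k x.
Proof. move=> Hg Hh Hx; by apply: Derive_n_plus; [apply: Sm_loc Hg Hx|apply: Sm_loc Hh Hx]. Qed.

Lemma Dn_minus a b g h k x : smooth_on a b g -> smooth_on a b h -> a < x < b ->
  Derive_n (fun t => g t - h t) k x = Derive_n g k x - Derive_n h k x.
Proof. move=> Hg Hh Hx; by apply: Derive_n_minus; [apply: Sm_loc Hg Hx|apply: Sm_loc Hh Hx]. Qed.

Definition van (g : R -> R) (p : nat) (x0 : R) := forall j, (j < p)%N -> Derive_n g j x0 = 0.

Lemma van_le g p p' x0 : (p <= p')%N -> van g p' x0 -> van g p x0.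
Proof. move=> Hp H j Hj; apply: H; exact: leq_trans Hj Hp. Qed.

Lemma van_Derive g p x0 : van g p.+1 x0 -> van (Derive g) p x0.
Proof. move=> H j Hj; rewrite -Dn_S; exact: H. Qed.


Lemma van_mult a b x0 p : forall g h, smooth_on a b g -> smooth_on a b h -> a < x0 < b ->
  van g p x0 -> van (fun t => g t * h t) p x0.
Proof.
elim: p => [|p IH] g h Hg Hh Hx H [|j] Hj //.
  by move: (H 0%N Hj) => /= ->; rewrite Rmult_0_l.
have Hg' := Sm_Derive Hg; have Hh' := Sm_Derive Hh.
rewrite (Dn_mult_S _ Hg Hh Hx) (Dn_plus _ _ _ Hx); try by apply: Sm_mult.
rewrite (IH (Derive g) h) //; last exact: van_Derive.
rewrite (IH g (Derive h)) //; first by rewrite Rplus_0_r.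
exact: van_le (leqnSn p) H.
Qed.

Lemma Der_lin x0 t : Derive (fun t => t - x0) t = 1.
Proof. apply: is_derive_unique; auto_derive => //; ring. Qed.

Lemma Sm_lin a b x0 : smooth_on a b (fun t => t - x0).
Proof. apply: Sm_minus; [exact: Sm_id|exact: Sm_const]. Qed.

Lemma Dn_lin a b x0 j : forall g, smooth_on a b g -> a < x0 < b ->
  Derive_n (fun t => (t - x0) * g t) j x0 = INR j * Derive_n g j.-1 x0.
Proof.
elim: j => [|j IH] g Hg Hx.
  rewrite /=; ring.
rewrite (Dn_mult_S _ (@Sm_lin a b x0) Hg Hx).
rewrite (Derive_n_ext _ (fun t => g t + (t - x0) * Derive g t)); last first.
  by move=> t; rewrite Der_lin Rmult_1_l.
rewrite (Dn_plus _ Hg _ Hx); last first.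
  apply: Sm_mult; [exact: Sm_lin|exact: Sm_Derive].
rewrite IH //; last exact: Sm_Derive.
case: j {IH} => [|j]; first by rewrite /=; ring.
rewrite (S_INR j.+1) -Dn_S; simpl predn; ring.
Qed.

Lemma van_lin a b x0 p g : smooth_on a b g -> a < x0 < b -> van g p x0 ->
  van (fun t => (t - x0) * g t) p.+1 x0.
Proof.
move=> Hg Hx H [|j] Hj; rewrite (Dn_lin _ Hg Hx).
  by rewrite /= Rmult_0_l.
by rewrite /= H // Rmult_0_r.
Qed.

Lemma van_plus a b x0 p g h : smooth_on a b g -> smooth_on a b h -> a < x0 < b ->
  van g p x0 -> van h p x0 -> van (fun t => g t + h t) p x0.
Proof. move=> Hg Hh Hx H1 H2 j Hj; rewrite (Dn_plus _ Hg Hh Hx) H1 // H2 //; ring. Qed.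

Lemma van_minus a b x0 p g h : smooth_on a b g -> smooth_on a b h -> a < x0 < b ->
  van g p x0 -> van h p x0 -> van (fun t => g t - h t) p x0.
Proof. move=> Hg Hh Hx H1 H2 j Hj; rewrite (Dn_minus _ Hg Hh Hx) H1 // H2 //; ring. Qed.

Lemma van_scal x0 p c g : van g p x0 -> van (fun t => c * g t) p x0.
Proof. move=> H j Hj; rewrite Derive_n_scal_l H //; ring. Qed.

Lemma sum_van (g : nat -> R) N : (forall j, (j < N)%N -> g j = 0) -> sum_f_R0 g N = g N.
Proof.
elim: N => [|N IH] H //=.
rewrite IH; first by rewrite H // Rplus_0_l.
move=> j Hj; apply: H; exact: ltnW.
Qed.

Lemma negpow u m : (- u) ^ m * (-1) ^ m = u ^ m.
Proof. rewrite -Rpow_mult_distr; f_equal; ring. Qed.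

Lemma taylor_gen a b F N x y : smooth_on a b F -> a < x < b -> a < y < b -> x <> y ->
  exists z, Rmin x y < z < Rmax x y /\
  F y = sum_f_R0 (fun m => (y - x) ^ m / INR (Factorial.fact m) * Derive_n F m x) N +
    (y - x) ^ S N / INR (Factorial.fact (S N)) * Derive_n F (S N) z.
Proof.
move=> HF Hx Hy Hxy.
case: (Rlt_le_dec x y) => Hlt.
  have [z [Hz E]] := Taylor_Lagrange F N x y Hlt
    (fun t Ht k _ => HF k t (conj (Rlt_le_trans _ _ _ (proj1 Hx) (proj1 Ht))
                               (Rle_lt_trans _ _ _ (proj2 Ht) (proj2 Hy)))).
  exists z; rewrite Rmin_left ?Rmax_right; try lra; split => //.
have Hlt' : - x < - y by lra.
have HG : forall t, - x <= t <= - y -> forall k, (k <= S N)%coq_nat ->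
    ex_derive_n (fun t => F (- t)) k t.
  move=> t Ht k _; apply: ex_derive_n_comp_opp; apply: (Sm_loc _ HF); lra.
have [z [Hz E]] := Taylor_Lagrange (fun t => F (- t)) N (- x) (- y) Hlt' HG.
exists (- z); rewrite Rmin_right ?Rmax_left; try lra; split; first lra.
move: E; rewrite !Ropp_involutive => ->.
have Hd : forall m t, a < - t < b ->
   Derive_n (fun t => F (- t)) m t = (-1) ^ m * Derive_n F m (- t).
  move=> m t Ht; apply: Derive_n_comp_opp; exact: (Sm_loc _ HF).
f_equal.
  congr (sum_f_R0 _ N); apply: functional_extensionality => m; rewrite Hd; last by rewrite Ropp_involutive.
  rewrite Ropp_involutive -(negpow (y - x) m).
  rewrite (_ : - y - - x = - (y - x)); last ring.
  field; apply: not_0_INR; apply: Factorial.fact_neq_0.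
rewrite Hd; last lra.
rewrite -(negpow (y - x) (S N)) (_ : - y - - x = - (y - x)); last ring.
field; apply: not_0_INR; apply: Factorial.fact_neq_0.
Qed.

Lemma taylor_van a b F N x y : smooth_on a b F -> a < x < b -> a < y < b -> x <> y ->
  van F N x ->
  exists z, Rmin x y < z < Rmax x y /\
  F y = (y - x) ^ N / INR (Factorial.fact N) * Derive_n F N x +
    (y - x) ^ S N / INR (Factorial.fact (S N)) * Derive_n F (S N) z.
Proof.
move=> HF Hx Hy Hxy Hv.
have [z [Hz E]] := taylor_gen N HF Hx Hy Hxy.
exists z; split => //; rewrite E sum_van // => j Hj; rewrite Hv //; ring.
Qed.

Definition Nmat n m (phi : 'I_n.+1 -> R -> R) (alpha : 'I_m -> nat) (v : 'I_n.+1 -> R)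
  (y : 'I_m -> R) : 'M[R]_n.+1 :=
  \matrix_(p, c) if (p == 0%N :> nat) then v c
                 else nth (fun _ => 0) (lower_rows phi alpha y) p.-1 c.

Definition cof n m (phi : 'I_n.+1 -> R -> R) (alpha : 'I_m -> nat) y (c : 'I_n.+1) : R :=
  cofactor (Nmat phi alpha (fun _ => 0) y) ord0 c.

Lemma det_N n m (phi : 'I_n.+1 -> R -> R) (alpha : 'I_m -> nat) v y :
  (\det (Nmat phi alpha v y))%R = (\sum_c v c * cof phi alpha y c)%R.
Proof.
rewrite (expand_det_row _ ord0); apply: eq_bigr => c _.
rewrite mxE /=; congr (_ * _)%R.
rewrite /cof /cofactor; congr (_ * \det _)%R.
by apply/matrixP => i j; rewrite !mxE lift0.
Qed.

Lemma Ddet_N n m (phi : 'I_n.+1 -> R -> R) (alpha : 'I_m -> nat) x y :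
  Ddet phi alpha x y = (\sum_c phi c x * cof phi alpha y c)%R.
Proof. exact: (det_N phi alpha (fun c => phi c x) y). Qed.

Lemma Sm_sum a b N (F : 'I_N -> R -> R) : (forall c, smooth_on a b (F c)) ->
  smooth_on a b (fun x => \sum_(c < N) F c x)%R.
Proof.
elim: N F => [|N IH] F HF.
  have -> : (fun x => \sum_(c < 0) F c x)%R = (fun _ => 0).
    by apply: functional_extensionality => x; rewrite big_ord0.
  exact: Sm_const.
have -> : (fun x => \sum_(c < N.+1) F c x)%R =
   (fun x => (\sum_(c < N) F (widen_ord (leqnSn N) c) x)%R + F ord_max x).
  by apply: functional_extensionality => x; rewrite big_ord_recr.
apply: Sm_plus => //; exact: IH.
Qed.

Lemma Dn_sum a b N (F : 'I_N -> R -> R) k x : (forall c, smooth_on a b (F c)) ->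
  a < x < b ->
  Derive_n (fun x => \sum_(c < N) F c x)%R k x = (\sum_(c < N) Derive_n (F c) k x)%R.
Proof.
elim: N F => [|N IH] F HF Hx.
  rewrite big_ord0 (Derive_n_ext _ (fun _ => 0)); last by move=> t; rewrite big_ord0.
  by case: k => // k; rewrite (Derive_n_const k 0 x).
rewrite (Derive_n_ext _ (fun x => (\sum_(c < N) F (widen_ord (leqnSn N) c) x)%R + F ord_max x)); last first.
  by move=> t; rewrite big_ord_recr.
rewrite (Dn_plus _ _ (HF _) Hx); last by apply: Sm_sum.
by rewrite IH // big_ord_recr.
Qed.

Lemma nth_flat (T : Type) (x0 : T) (ss : seq (seq T)) i r :
  (i < size ss)%N -> (r < size (nth [::] ss i))%N ->
  exists p, (p < size (flatten ss))%N /\ nth x0 (flatten ss) p = nth x0 (nth [::] ss i) r.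
Proof.
elim: ss i => [|s ss IH] [|i] //= Hi Hr.
  exists r; rewrite size_cat nth_cat Hr; split => //; exact: ltn_addr.
have [p [Hp E]] := IH i Hi Hr.
exists (size s + p)%N; rewrite size_cat nth_cat (_ : (size s + p < size s)%N = false) ?addKn; last by rewrite ltnNge leq_addr.
split => //.
by rewrite ltn_add2l.
Qed.

Lemma size_lower n m (phi : 'I_n.+1 -> R -> R) (alpha : 'I_m -> nat) y :
  size (lower_rows phi alpha y) = (\sum_(j < m) alpha j)%N.
Proof.
rewrite /lower_rows size_flatten /shape -map_comp.
rewrite (eq_map (g := alpha)); last by move=> j /=; rewrite size_map size_iota.
by rewrite sumnE big_map big_enum.
Qed.

Lemma row_exists n m (phi : 'I_n.+1 -> R -> R) (alpha : 'I_m -> nat) y (i : 'I_m) r :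
  (\sum_(j < m) alpha j)%N = n -> (r < alpha i)%N ->
  exists p : 'I_n.+1, p != ord0 /\
    forall c, Nmat phi alpha (fun c => Derive_n (phi c) r (y i)) y p c = Derive_n (phi c) r (y i).
Proof.
move=> Hn Hr.
have Hi : (i < size (enum 'I_m))%N by rewrite size_enum_ord.
set G := fun j : 'I_m => [seq (fun c : 'I_n.+1 => Derive_n (phi c) r0 (y j)) | r0 <- seq.iota 0%N (alpha j)].
have HG : nth [::] [seq G j | j <- enum 'I_m] i = G i.
  by rewrite (nth_map i) //; congr G; apply: val_inj; rewrite /= nth_enum_ord.
have := @nth_flat _ (fun _ : 'I_n.+1 => 0) [seq G j | j <- enum 'I_m] i r.
rewrite size_map HG /G size_map size_iota => /(_ Hi Hr) [p [Hp E]].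
have Hp' : (p.+1 < n.+1)%N.
  by move: Hp; rewrite -/(lower_rows phi alpha y) size_lower Hn.
exists (Ordinal Hp'); split => // c.
rewrite /Nmat mxE /=.
rewrite -/(lower_rows phi alpha y) in E.
rewrite E /G (nth_map 0%N) ?size_iota // nth_iota //.
Qed.

Lemma Sm_Ddet a b n m (phi : 'I_n.+1 -> R -> R) (alpha : 'I_m -> nat) y :
  (forall j, smooth_on a b (phi j)) -> smooth_on a b (fun x => Ddet phi alpha x y).
Proof.
move=> Hphi.
have -> : (fun x => Ddet phi alpha x y) = (fun x => \sum_c (phi c x * cof phi alpha y c))%R.
  by apply: functional_extensionality => x; rewrite Ddet_N.
apply: Sm_sum => c; apply: (Sm_mult (Hphi c)); exact: Sm_const.
Qed.

Lemma van_f a b n m (phi : 'I_n.+1 -> R -> R) (alpha : 'I_m -> nat) xs i :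
  (forall j, smooth_on a b (phi j)) -> (\sum_(j < m) alpha j)%N = n ->
  a < xs i < b -> van (fpoly phi alpha xs) (alpha i) (xs i).
Proof.
move=> Hphi Hn Hx j Hj.
rewrite (Derive_n_ext _ (fun x => \sum_c (phi c x * cof phi alpha xs c))%R); last first.
  by move=> t; rewrite /fpoly Ddet_N.
rewrite (Dn_sum (a:=a) (b:=b)) //; last first.
  move=> c; apply: (Sm_mult (Hphi c)); exact: Sm_const.
rewrite (eq_bigr (fun c => (Derive_n (phi c) j (xs i) * cof phi alpha xs c)%R)); last first.
  by move=> c _; exact: Derive_n_scal_r.
rewrite -det_N.
have [p [Hp E]] := row_exists phi xs Hn Hj.
apply: (determinant_alternate Hp) => c.
by rewrite E /Nmat mxE.
Qed.

Ltac sm Hf HQ :=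
  first [ exact Hf | exact HQ | exact (Sm_Derive Hf) | exact (Sm_Derive HQ)
        | exact: Sm_lin | exact: Sm_const
        | apply: Sm_minus; sm Hf HQ | apply: Sm_mult; sm Hf HQ ].

Lemma Sm_Phi a b f Q x0 (e : R) : smooth_on a b f -> smooth_on a b Q ->
  smooth_on a b (fun x => (e + 1) * ((x - x0) * Derive f x - e * f x) * Q x
                          - (x - x0) * f x * Derive Q x).
Proof. move=> Hf HQ; sm Hf HQ. Qed.

Lemma Sm_Psi a b f Q (e : R) : smooth_on a b f -> smooth_on a b Q ->
  smooth_on a b (fun x => (e + 1) * Derive f x * Q x - f x * Derive Q x).
Proof. move=> Hf HQ; sm Hf HQ. Qed.

Lemma van_h1 a b f x0 al : smooth_on a b f -> a < x0 < b -> van f al x0 ->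
  van (fun x => (x - x0) * Derive f x - INR al * f x) al.+1 x0.
Proof.
move=> Hf Hx Hv [|j] Hj.
  rewrite /=; case: al Hv Hj => [|al] Hv Hj; first by rewrite /=; ring.
  have := Hv 0%N (ltn0Sn _); rewrite /= => ->; ring.
have Hf' := Sm_Derive Hf.
rewrite (Dn_minus _ _ _ Hx); first last.
- exact: Sm_scal.
- apply: Sm_mult => //; exact: Sm_lin.
rewrite (Dn_lin _ Hf' Hx) Derive_n_scal_l [j.+1.-1]/= -Dn_S.
move: Hj; rewrite ltnS leq_eqVlt => /orP [/eqP <-|Hj]; first ring.
rewrite Hv //; ring.
Qed.

Lemma van_Phi a b f Q x0 al : smooth_on a b f -> smooth_on a b Q -> a < x0 < b ->
  van f al x0 ->
  van (fun x => (INR al + 1) * ((x - x0) * Derive f x - INR al * f x) * Q x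
                          - (x - x0) * f x * Derive Q x) al.+1 x0.
Proof.
move=> Hf HQ Hx Hv.
apply: van_minus; try sm Hf HQ; try exact Hx.
  apply: (@van_mult a b x0 al.+1 (fun x => (INR al + 1) * ((x - x0) * Derive f x - INR al * f x)) Q); try sm Hf HQ; try exact Hx.
  apply: van_scal; exact: (van_h1 Hf Hx Hv).
apply: (@van_mult a b x0 al.+1 (fun x => (x - x0) * f x) (Derive Q)); try sm Hf HQ; try exact Hx.
exact: (van_lin Hf Hx Hv).
Qed.

Lemma van_Psi a b f Q x0 al : smooth_on a b f -> smooth_on a b Q -> a < x0 < b ->
  van f al.+1 x0 ->
  van (fun x => (INR al.+1 + 1) * Derive f x * Q x - f x * Derive Q x) al x0.
Proof.
move=> Hf HQ Hx Hv.
apply: van_minus; try sm Hf HQ; try exact Hx.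
  apply: (@van_mult a b x0 al (fun x => (INR al.+1 + 1) * Derive f x) Q); try sm Hf HQ; try exact Hx.
  apply: van_scal; exact: (van_Derive Hv).
apply: (@van_mult a b x0 al f (Derive Q)); try sm Hf HQ; try exact Hx.
exact: van_le (leqnSn al) Hv.
Qed.

Lemma lincomb_bound m (C d : 'I_m -> R) A dl :
  (forall s, Rabs (C s) <= A) -> (forall s, Rabs (d s) < dl) ->
  Rabs (lincomb C d) <= INR m * A * dl.
Proof.
rewrite /lincomb; elim: m C d => [|m IH] C d HC Hd.
  by rewrite big_ord0 /= Rabs_R0; lra.
have -> : (\sum_(s < m.+1) C s * d s)%R = (\sum_(s < m) C (widen_ord (leqnSn m) s) * d (widen_ord (leqnSn m) s))%R + C ord_max * d ord_max.
  by rewrite big_ord_recr.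
apply: Rle_trans (Rabs_triang _ _) _.
rewrite Rabs_mult S_INR.
have h1 := IH (fun s => C (widen_ord (leqnSn m) s)) (fun s => d (widen_ord (leqnSn m) s))
   (fun s => HC _) (fun s => Hd _).
have h2 : Rabs (C ord_max) * Rabs (d ord_max) <= A * dl.
  apply: Rmult_le_compat; try apply: Rabs_pos; [exact: HC|exact: Rlt_le].
have := h1; rewrite /=; nra.
Qed.

Lemma iter_alg (y x0 ea fy f1 Qy Q1 : R) : 0 <= ea -> Qy <> 0 ->
  f1 - fy * Q1 / ((ea + 1) * Qy) <> 0 ->
  y - ea * fy / (f1 - fy * Q1 / ((ea + 1) * Qy)) - x0 =
  ((ea + 1) * ((y - x0) * f1 - ea * fy) * Qy - (y - x0) * fy * Q1) /
  ((ea + 1) * f1 * Qy - fy * Q1).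
Proof.
move=> He HQ Hbr.
have E : (ea + 1) * f1 * Qy - fy * Q1 = (ea + 1) * Qy * (f1 - fy * Q1 / ((ea + 1) * Qy)).
  field; split => //; lra.
have Hne : (ea + 1) * f1 * Qy - fy * Q1 <> 0.
  rewrite E; apply: Rmult_integral_contrapositive_currified => //.
  apply: Rmult_integral_contrapositive_currified => //; lra.
rewrite E; field; repeat split => //; lra.
Qed.

Lemma fid1 d N al : N = al.+1 -> d ^ N.+1 / INR (Factorial.fact N.+1) =
  d ^ al / INR (Factorial.fact al) * (d ^ 2 / ((INR al + 1) * (INR al + 2))).
Proof.
move=> ->; have := INR_fact_neq_0 al; have := pos_INR al => h1 h2.
rewrite !Rfunctions.fact_simpl !mult_INR !S_INR -!tech_pow_Rmult; field; lra.
Qed.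

Lemma fid2 d N al : N = al.+1 -> d ^ N.+2 / INR (Factorial.fact N.+2) =
  d ^ al / INR (Factorial.fact al) * (d ^ 2 / ((INR al + 1) * (INR al + 2))) * (d / (INR al + 3)).
Proof.
move=> ->; have := INR_fact_neq_0 al; have := pos_INR al => h1 h2.
rewrite !Rfunctions.fact_simpl !mult_INR !S_INR -!tech_pow_Rmult; field; lra.
Qed.

Lemma fid3 d al : d ^ al.+1 / INR (Factorial.fact al.+1) =
  d ^ al / INR (Factorial.fact al) * (d / (INR al + 1)).
Proof.
have := INR_fact_neq_0 al; have := pos_INR al => h1 h2.
rewrite !Rfunctions.fact_simpl !mult_INR !S_INR -!tech_pow_Rmult; field; lra.
Qed.

Unset Implicit Arguments.
Set Strict Implicit.

Theorem mainTheorem1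
  (a b : R) (n m : nat) (phi : 'I_n.+1 -> R -> R) (alpha : 'I_m -> nat)
  (xs xk : 'I_m -> R) (k : nat)
  (Acoef Bcoef : 'I_m -> 'I_m -> R) (A B M K P c q : R) :
  a < b ->
  (forall j, smooth_on a b (phi j)) ->
  chebyshev_system a b phi ->
  (forall j, (0 < alpha j)%N) ->
  (\sum_(j < m) alpha j)%N = n ->
  injective xs ->
  (forall i, a < xs i < b) ->
  (forall i, a < xk i < b) ->
  (* the iteration (star) is well defined *)
  (forall i, Qfun phi alpha xk i (xk i) <> 0) ->
  (forall i, iter_bracket phi alpha xs xk i <> 0) ->
  (forall i, Derive_n (Phifun phi alpha xs xk i) (alpha i + 1) (xs i)
             = lincomb (Acoef i) (fun s => xk s - xs s)) ->
  (forall i, Derive_n (Psifun phi alpha xs xk i) (alpha i - 1) (xs i)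
             = (INR (alpha i) + 1) * (Derive_n (fpoly phi alpha xs) (alpha i) (xs i)) ^ 2
               + lincomb (Bcoef i) (fun s => xk s - xs s)) ->
  (forall i s, Rabs (Acoef i s) <= A) ->
  (forall i s, Rabs (Bcoef i s) <= B) ->
  (forall i x, Rmin (xs i) (xk i) <= x <= Rmax (xs i) (xk i) ->
     Rabs (Derive_n (Phifun phi alpha xs xk i) (alpha i + 2) x) <= M) ->
  (forall i x, Rmin (xs i) (xk i) <= x <= Rmax (xs i) (xk i) ->
     Rabs (Derive_n (Psifun phi alpha xs xk i) (alpha i) x) <= K) ->
  0 < P ->
  (forall i, P <= Rabs (Derive_n (fpoly phi alpha xs) (alpha i) (xs i))) ->
  0 < c -> 0 < q < 1 ->
  (forall i,
     c ^ 2 * (INR m * A + M / (INR (alpha i) + 2))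
     < (INR (alpha i) + 1) ^ 2 * INR (alpha i) * P ^ 2
       - c * (INR (alpha i) + 1) * (INR (alpha i) * B * INR m + K)) ->
  (forall i, Rabs (xk i - xs i) < c * q ^ (3 ^ k)%nat) ->
  forall i, Rabs (next_iter phi alpha xs xk i - xs i) < c * q ^ (3 ^ k.+1)%nat.
Proof.
move=> Hab Hphi _ Hpos Hn _ Hxs Hxk HQ Hbr HPhi HPsi HA HB HM HK HP0 HP Hc Hq Hcond Hk i.
have Hf : smooth_on a b (fpoly phi alpha xs) by exact: Sm_Ddet.
have HQs : smooth_on a b (Qfun phi alpha xk i).
  by apply: (Sm_Derive_n (g := fun t => Ddet phi alpha t xk)); exact: Sm_Ddet.
have Hvf := van_f Hphi Hn (Hxs i).
have Hqk : 0 < q ^ (3 ^ k)%nat by apply: pow_lt; lra.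
have E3 : q ^ (3 ^ k.+1)%nat = (q ^ (3 ^ k)%nat) ^ 3.
  by rewrite expnSr -pow_mult.
case: (Req_dec (xk i) (xs i)) => Hd.
  have Hf0 : fpoly phi alpha xs (xk i) = 0 by rewrite Hd; exact: (Hvf 0%N (Hpos i)).
  have -> : next_iter phi alpha xs xk i - xs i = 0.
    rewrite /next_iter; cbv zeta; rewrite Hf0 Hd; field; exact: (Hbr i).
  rewrite Rabs_R0; apply: Rmult_lt_0_compat => //; rewrite E3; exact: pow_lt.
have [al Ea] : exists al, alpha i = al.+1.
  by case: (alpha i) (Hpos i) => // al _; exists al.
set Phi := Phifun phi alpha xs xk i.
set Psi := Psifun phi alpha xs xk i.
have HPhiS : smooth_on a b Phi := Sm_Phi (xs i) (INR (alpha i)) Hf HQs.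
have HPsiS : smooth_on a b Psi := Sm_Psi (INR (alpha i)) Hf HQs.
have HvPhi : van Phi (alpha i).+1 (xs i) := van_Phi Hf HQs (Hxs i) Hvf.
have HvPsi : van Psi al (xs i).
  have Hvf' : van (fpoly phi alpha xs) al.+1 (xs i) by rewrite -Ea.
  have := van_Psi Hf HQs (Hxs i) Hvf'; rewrite -Ea; exact.
have Hne : xs i <> xk i by move=> h; apply: Hd; rewrite h.
have [z [Hz EPh]] := taylor_van HPhiS (Hxs i) (Hxk i) Hne HvPhi.
have [w0 [Hw0 EPs]] := taylor_van HPsiS (Hxs i) (Hxk i) Hne HvPsi.
have HPh1 : Derive_n Phi (alpha i).+1 (xs i) = lincomb (Acoef i) (fun s => xk s - xs s).
  by rewrite /Phi -addn1; exact: HPhi.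
have HPs0 : Derive_n Psi al (xs i) = (INR (alpha i) + 1) *
    Derive_n (fpoly phi alpha xs) (alpha i) (xs i) ^ 2 + lincomb (Bcoef i) (fun s => xk s - xs s).
  by have h := HPsi i; rewrite Ea subn1 succnK -Ea in h; exact: h.
have HM' : Rabs (Derive_n Phi (alpha i).+2 z) <= M.
  by rewrite /Phi -addn2; apply: HM; lra.
have HK' : Rabs (Derive_n Psi al.+1 w0) <= K.
  by rewrite /Psi -Ea; apply: HK; lra.
have Hint : Rmin (xs i) (xk i) <= xs i <= Rmax (xs i) (xk i).
  by split; [apply: Rmin_l|apply: Rmax_l].
have HM0 : 0 <= M by apply: Rle_trans (HM i _ Hint); apply: Rabs_pos.
have HK0 : 0 <= K by apply: Rle_trans (HK i _ Hint); apply: Rabs_pos.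
have HA0 : 0 <= A by apply: Rle_trans (HA i i); apply: Rabs_pos.
have HB0 : 0 <= B by apply: Rle_trans (HB i i); apply: Rabs_pos.
set d := xk i - xs i.
set dl := c * q ^ (3 ^ k)%nat.
set e := INR al.
set w := d ^ al / INR (Factorial.fact al).
have Hw : w <> 0.
  apply: Rmult_integral_contrapositive_currified.
    by apply: pow_nonzero; rewrite /d => h; apply: Hd; lra.
  apply: Rinv_neq_0_compat; exact: INR_fact_neq_0.
have EPh' : Phi (xk i) = w * (d ^ 2 / ((e + 1) * (e + 2)) *
    (lincomb (Acoef i) (fun s => xk s - xs s) + Derive_n Phi (alpha i).+2 z * d / (e + 3))).
  rewrite EPh HPh1 (fid1 _ Ea) (fid2 _ Ea) -/w -/e; rewrite /d. field.
  rewrite /e; have := pos_INR al; lra.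
have EPs' : Psi (xk i) = w * (Derive_n Psi al (xs i) + Derive_n Psi al.+1 w0 * d / (e + 1)).
  rewrite EPs fid3 -/w -/e /d; field.
  rewrite /e; have := pos_INR al; lra.
have He : 0 <= e by exact: pos_INR.
have Hdl : 0 < dl by apply: Rmult_lt_0_compat.
have Hdlc : dl <= c.
  rewrite /dl -{2}(Rmult_1_r c); apply: Rmult_le_compat_l; first lra.
  rewrite -(pow1 (3 ^ k)%nat); apply: pow_incr; lra.
have Hbd := Hk i.
have HLA := lincomb_bound (HA i) Hk.
have HLB := lincomb_bound (HB i) Hk.
have EPs0 : Derive_n Psi al (xs i) = (e + 2) *
    Derive_n (fpoly phi alpha xs) (alpha i) (xs i) ^ 2 + lincomb (Bcoef i) (fun s => xk s - xs s).
  by rewrite HPs0 Ea S_INR -/e; ring.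
have Hyp : c ^ 2 * (INR m * A + M / (e + 3)) <
    (e + 2) ^ 2 * (e + 1) * P ^ 2 - c * (e + 2) * ((e + 1) * B * INR m + K).
  have h := Hcond i; rewrite Ea S_INR -/e in h.
  rewrite (_ : e + 1 + 2 = e + 3) in h; last ring.
  rewrite (_ : e + 1 + 1 = e + 2) in h; last ring.
  exact: h.
have Hfin := final_ineq _ _ _ _ _ _ _ _ _ _ _ _ _ _ _ _ _ _ _ Hw EPh' EPs' He Hc Hdl Hdlc Hbd HLA HM' HK' HLB (HP i) HP0 HA0 HB0
  (pos_INR m) HM0 HK0 EPs0 Hyp.
have Enext : next_iter phi alpha xs xk i - xs i = Phi (xk i) / Psi (xk i).
  have Hbr' := Hbr i; rewrite /iter_bracket in Hbr'; cbv zeta in Hbr'.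
  rewrite /next_iter /iter_bracket /Phi /Psi /Phifun /Psifun; cbv zeta.
  apply: iter_alg; [exact: pos_INR|exact: HQ|exact: Hbr'].
rewrite Enext E3.
have -> : c * (q ^ (3 ^ k)%nat) ^ 3 = dl ^ 3 / c ^ 2.
  rewrite /dl; field; lra.
exact: Hfin.
Qed.
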